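(* Consider a GNEP with $N$ players in which player $\nu$ has constraint function $c^\nu:\mathbb{R}^n\to\mathbb{R}^{r_\nu}$ (continuously differentiable). Let $\nu$ be a given index, let $x\in\mathbb{R}^n$ with $c^\nu(x)\le0$, and assume that $c^\nu$ satisfies MFCQ$_\nu$ in $x$. Then: (a) There is a neighbourhood $U$ of $x$ such that, for every $y\in U$, the set $X_\nu(y^{-\nu})$ is nonempty. (b) Given $\varepsilon>0$, there is a neighbourhood $U$ of $x$ such that for every $y\in U$ there is a point $z^\nu\in X_\nu(y^{-\nu})$ with $\|z^\nu-y^\nu\|\le\varepsilon$.
   Context: Variables: $x=(x^1,\ldots,x^N)\in\mathbb{R}^n$, $x^\nu\in\mathbb{R}^{n_\nu}$, written $x=(x^\nu,x^{-\nu})$ where $x^{-\nu}$ collects the other blocks. $X_\nu(x^{-\nu})=\{x^\nu\in\mathbb{R}^{n_\nu}: c^\nu(x^\nu,x^{-\nu})\le 0\}$. $\nabla_{x^\nu}c_i^\nu$ denotes the partial gradient with respect to $x^\nu$. MFCQ$_\nu$ at a point $x$ with $c^\nu(x)\le0$: there is $d^\nu\in\mathbb{R}^{n_\nu}$ with $\nabla_{x^\nu}c_i^\nu(x)^Td^\nu<0$ for every $i$ with $c_i^\nu(x)=0$ (equivalently, for every $i$ with $c_i^\nu(x)\ge 0$). Norms are Euclidean. *)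

(* Defs.v *)
From HB Require Import structures.
From mathcomp Require Import all_boot all_order all_algebra.
From mathcomp Require Import all_classical all_reals all_analysis.
Set Implicit Arguments. Unset Strict Implicit. Unset Printing Implicit Defensive.
Import Order.TTheory GRing.Theory Num.Theory.
Import numFieldNormedType.Exports.
Local Open Scope classical_set_scope.
Local Open Scope ring_scope.

(* Fixed player nu.  The full variable space R^n is split as
   R^n = R^{n_nu} x R^{n - n_nu}, a point being  x = row_mx x^nu x^{-nu},
   with  x^nu = lsubmx x  and  x^{-nu} = rsubmx x.  *)

Definition enorm (R : realType) (k : nat) (v : 'rV[R]_k) : R :=
  Num.sqrt (\sum_(i < k) v 0 i ^+ 2).

(* Continuously differentiable real function on R^m: differentiable
   everywhere, with continuous derivative (in finite dimension: x |-> Df(x) v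
   continuous for every direction v). *)
Definition C1 (R : realType) (m : nat) (f : 'rV[R]_m -> R) : Prop :=
  (forall y, differentiable f y) /\
  (forall v : 'rV[R]_m, continuous (fun y => 'd f y v)).

Definition Xnu (R : realType) (p q r : nat) (c : 'I_r -> 'rV[R]_(p + q) -> R)
  (ymnu : 'rV[R]_q) : set 'rV[R]_p :=
  [set z | forall i, c i (row_mx z ymnu) <= 0].

(* grad_{x^nu} c_i(x)^T d, i.e. the derivative of c_i at x in direction (d,0). *)
Definition pgrad_dot (R : realType) (p q : nat) (f : 'rV[R]_(p + q) -> R)
  (x : 'rV[R]_(p + q)) (d : 'rV[R]_p) : R :=
  'd f x (row_mx d 0).

Definition MFCQ (R : realType) (p q r : nat) (c : 'I_r -> 'rV[R]_(p + q) -> R)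
  (x : 'rV[R]_(p + q)) : Prop :=
  exists d : 'rV[R]_p, forall i, c i x = 0 -> pgrad_dot (c i) x d < 0.

(* Main.v *)
Require Import Defs.
From HB Require Import structures.
From mathcomp Require Import all_boot all_order all_algebra.
From mathcomp Require Import all_classical all_reals all_analysis.
Import Order.TTheory GRing.Theory Num.Theory.
Import numFieldNormedType.Exports.
Local Open Scope classical_set_scope.
Local Open Scope ring_scope.

Section S.

Variables (R : realType) (V : normedModType R).
Implicit Types (f : V -> R).
Lemma gcvg (D x : V) : (fun t : R => t *: D + x) @ 0 --> x.
Proof.
rewrite -[x in _ --> x]add0r -[X in X + _](scale0r D).
apply: cvgD; last exact: cvg_cst.
apply: cvgZr_tmp. exact: cvg_id.
Qed.
Lemma key (f : V -> R) x D : differentiable f x -> f x <= 0 ->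
  (f x = 0 -> 'd f x D < 0) -> \forall t \near 0^'+, f (t *: D + x) < 0.
Proof.
move=> df; rewrite le_eqVlt => /orP[/eqP fx0 dlt|fxlt _].
  have := diff_derivable (v:=D) df. rewrite /derivable.
  move=> /cvgP.
  rewrite -/(derive _ _ _) (deriveE _ df) => H.
  have HH : \forall h \near 0^', h^-1 *: ((f \o shift x) (h *: D) - f x) < 0.
    by apply: (@cvgr_lt R _ _ _ _ _ H); apply: dlt.
  move: HH; rewrite !near_withinE /=. apply: filterS => h Hh hpos.
  have := Hh (lt0r_neq0 hpos). rewrite fx0 subr0 /=.
  by rewrite pmulr_rlt0 ?invr_gt0.
have H := differentiable_continuous df.
have HH : \forall y \near x, f y < 0.
  by apply: (@cvgr_lt R _ _ _ _ _ H).
have := gcvg D x _ HH.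
rewrite near_withinE => H2.
have H3 : nbhs (0:R) (fun t => f (t *: D + x) < 0) := H2.
by apply: filterS H3 => t Ht _.
Qed.
End S.

Lemma enormZ (R : realType) (k : nat) (t : R) (v : 'rV[R]_k) :
  enorm (t *: v) = `|t| * enorm v.
Proof.
rewrite /enorm.
under eq_bigr do rewrite mxE exprMn.
by rewrite -mulr_sumr sqrtrM ?sqr_ge0 // sqrtr_sqr.
Qed.

Lemma gcvg2 (R : realType) (V : normedModType R) (u x : V) :
  (fun y : V => u + y) @ x --> u + x.
Proof. apply: cvgD; [exact: cvg_cst | exact: cvg_id]. Qed.

Theorem lemma2p9 (R : realType) (p q r : nat)
  (c : 'I_r -> 'rV[R]_(p + q) -> R) (x : 'rV[R]_(p + q)) :
  (forall i, C1 (c i)) ->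
  (forall i, c i x <= 0) ->
  MFCQ c x ->
  (exists U : set 'rV[R]_(p + q), nbhs x U /\
     forall y, U y -> Xnu c (rsubmx y) !=set0) /\
  (forall eps : R, 0 < eps ->
     exists U : set 'rV[R]_(p + q), nbhs x U /\
       forall y, U y -> exists z, Xnu c (rsubmx y) z /\ enorm (z - lsubmx y) <= eps).
Proof.
move=> Cc cx [d Hd].
set D : 'rV[R]_(p + q) := row_mx d 0.
have B : forall eps : R, 0 < eps ->
     exists U : set 'rV[R]_(p + q), nbhs x U /\
       forall y, U y -> exists z, Xnu c (rsubmx y) z /\ enorm (z - lsubmx y) <= eps.
  move=> eps eps0.
  have k0 : 0 < enorm d + 1 by rewrite ltr_wpDl ?sqrtr_ge0.
  have H1 : \forall t \near 0^'+, forall i, c i (t *: D + x) < 0.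
    apply: filter_forall => i.
    apply: key; [exact: (Cc i).1 | exact: cx | exact: Hd].
  have H2 : \forall t \near (0:R)^'+, t < eps / (enorm d + 1).
    by apply: nbhs_right_lt; rewrite divr_gt0.
  have H3 := @nbhs_right_gt R 0.
  have [t [[Ht1 Ht2] Ht3]] := filter_ex (filterI (filterI H1 H2) H3).
  exists [set y | forall i, c i (t *: D + y) < 0]; split.
    apply: (@filter_forall _ _ (fun i y => c i (t *: D + y) < 0) (nbhs x) _) => i.
    have Hc := differentiable_continuous ((Cc i).1 (t *: D + x)).
    have HH : \forall y \near (t *: D + x), c i y < 0.
      by apply: (@cvgr_lt R _ _ _ _ _ Hc); apply: Ht1.
    exact: (@gcvg2 R _ (t *: D) x _ HH).
  move=> y Uy; exists (lsubmx y + t *: d); split.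
    move=> i; rewrite /=.
    have -> : row_mx (lsubmx y + t *: d) (rsubmx y) = t *: D + y.
      by rewrite /D scale_row_mx scaler0 -{3}(hsubmxK y) add_row_mx add0r addrC.
    exact: ltW (Uy i).
  rewrite addrC addKr enormZ gtr0_norm //.
  apply: (le_trans (y := t * (enorm d + 1))).
    by rewrite ler_pM2l // lerDl.
  by rewrite -ler_pdivlMr // ltW.
split => //.
have [U [nU HU]] := B 1 ltr01.
exists U; split => // y Uy.
by have [z [Hz _]] := HU y Uy; exists z.
Qed.
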